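(* Let $W$ be a finite Weyl group and $\tilde W=W\ltimes Z$ its affine Weyl group, with elements written $(a,\mathbf u)$, $a\in W$, $\mathbf u\in Z$. Let $X$ be a conjugacy class of involutions of $\tilde W$, and for $x=(a,\mathbf u)\in X$ write $\hat x=a$; let $\hat X$ be the conjugacy class of $\hat x$ in $W$ (this does not depend on the choice of $x\in X$). Suppose $x,y\in X$. If $d(\hat x,\hat y)=k$ in $\mathcal{C}(W,\hat X)$, then $d(x,y)\ge k$ in $\mathcal{C}(\tilde W,X)$. If $\mathcal{C}(W,\hat X)$ is disconnected, then $\mathcal{C}(\tilde W,X)$ is disconnected.
   Context: $W$ is a finite Weyl group with root system $\Phi$ in a Euclidean space $V\cong\mathbb{R}^n$, $\alpha^\vee=2\alpha/\langle\alpha,\alpha\rangle$, and $Z$ is the coroot lattice $L(\Phi^\vee)$ viewed as a group of translations. The affine Weyl group $\tilde W$ is the semidirect product of $W$ and $Z$, with elements $(a,\mathbf u)$ and multiplication $(a,\mathbf u)(b,\mathbf v)=(ab,\mathbf u^b+\mathbf v)$, where $\mathbf u\mapsto\mathbf u^b$ denotes the (right) linear action of $W$ on $V$. For a group $G$ and a set $X$ of involutions, $\mathcal{C}(G,X)$ is the graph on $X$ with $x,y$ adjacent iff they commute, and $d(x,y)$ denotes graph distance. *)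

(* Defs.v *)
From HB Require Import structures.
From mathcomp Require Import all_boot all_order all_algebra.
From mathcomp Require Import reals.
Set Implicit Arguments.
Unset Strict Implicit.
Unset Printing Implicit Defensive.
Import Order.TTheory GRing.Theory Num.Theory.
Local Open Scope ring_scope.

Section Graph.
Variable T : Type.
Variable V : T -> Prop.
Variable adj : T -> T -> Prop.

Definition walk (x y : T) (k : nat) : Prop :=
  exists f : nat -> T, [/\ f 0%N = x, f k = y,
    (forall i, (i <= k)%N -> V (f i)) &
    (forall i, (i < k)%N -> adj (f i) (f i.+1))].

Definition dist_eq (x y : T) (k : nat) : Prop :=
  walk x y k /\ forall j, (j < k)%N -> ~ walk x y j.

(* d(x,y) >= k  (d may be infinite) *)
Definition dist_ge (x y : T) (k : nat) : Prop :=
  forall j, (j < k)%N -> ~ walk x y j.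

Definition disconnected : Prop :=
  exists x y, [/\ V x, V y & forall k, ~ walk x y k].
End Graph.

Section Weyl.
Variable R : realType.
Variable n : nat.

Definition dotv (u v : 'rV[R]_n) : R := (u *m v^T) 0 0.

Definition coroot (a : 'rV[R]_n) : 'rV[R]_n := (2 / dotv a a) *: a.

(* reflection s_alpha : v |-> v - <v, alpha^vee> alpha, acting on the right
   on row vectors: v *m refl a *)
Definition refl (a : 'rV[R]_n) : 'M[R]_n := 1%:M - (coroot a)^T *m a.

(* (reduced, crystallographic) root system spanning V *)
Definition is_root_system (Phi : seq 'rV[R]_n) : Prop :=
  [/\ \rank (\matrix_(i < size Phi) nth 0 Phi i) = n,
      0 \notin Phi,
      forall a (c : R), a \in Phi -> c *: a \in Phi -> c = 1 \/ c = -1,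
      forall a b, a \in Phi -> b \in Phi -> b *m refl a \in Phi &
      forall a b, a \in Phi -> b \in Phi -> dotv b (coroot a) \is a Num.int].

Definition in_W (Phi : seq 'rV[R]_n) (M : 'M[R]_n) : Prop :=
  exists s : seq 'rV[R]_n,
    all (fun a => a \in Phi) s /\ M = foldr (fun a N => refl a *m N) 1%:M s.

Definition in_Z (Phi : seq 'rV[R]_n) (u : 'rV[R]_n) : Prop :=
  exists cs : seq (int * 'rV[R]_n),
    all (fun p => p.2 \in Phi) cs /\
    u = \sum_(p <- cs) (p.1)%:~R *: coroot p.2.

Definition aff := ('M[R]_n * 'rV[R]_n)%type.
Definition in_Wt (Phi : seq 'rV[R]_n) (x : aff) : Prop :=
  in_W Phi x.1 /\ in_Z Phi x.2.
Definition aff_mul (x y : aff) : aff := (x.1 *m y.1, x.2 *m y.1 + y.2).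
Definition aff_one : aff := (1%:M, 0).
Definition aff_inv (x : aff) : aff := (invmx x.1, - (x.2 *m invmx x.1)).

Definition W_involution (Phi : seq 'rV[R]_n) (a : 'M[R]_n) : Prop :=
  [/\ in_W Phi a, a *m a = 1%:M & a <> 1%:M].
Definition Wt_involution (Phi : seq 'rV[R]_n) (x : aff) : Prop :=
  [/\ in_Wt Phi x, aff_mul x x = aff_one & x <> aff_one].

Definition W_class (Phi : seq 'rV[R]_n) (a0 b : 'M[R]_n) : Prop :=
  exists g, in_W Phi g /\ b = g *m a0 *m invmx g.
Definition Wt_class (Phi : seq 'rV[R]_n) (x0 y : aff) : Prop :=
  exists g, in_Wt Phi g /\ y = aff_mul (aff_mul g x0) (aff_inv g).

Definition W_comm (a b : 'M[R]_n) : Prop := a *m b = b *m a /\ a <> b.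
Definition Wt_comm (x y : aff) : Prop := aff_mul x y = aff_mul y x /\ x <> y.
End Weyl.

(* Main.v *)
Require Import Defs.
From HB Require Import structures.
From mathcomp Require Import all_boot all_order all_algebra.
From mathcomp Require Import reals.
Import GRing.Theory Num.Theory.
Local Open Scope ring_scope.

Lemma lazy_walk (T : Type) (V : T -> Prop) (adj : T -> T -> Prop)
  (f : nat -> T) (j : nat) :
  (forall i, (i <= j)%N -> V (f i)) ->
  (forall i, (i < j)%N -> f i = f i.+1 \/ adj (f i) (f i.+1)) ->
  exists2 j', (j' <= j)%N & walk V adj (f 0%N) (f j) j'.
Proof.
elim: j => [|j IH] HV Ha.
  exists 0%N => //; exists f; split => //; by case.
have [j' lej' [g [g0 gj gV ga]]] : exists2 j', (j' <= j)%N & walk V adj (f 0%N) (f j) j'.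
  apply: IH => i Hi; [apply: HV; exact: leqW | apply: Ha; exact: ltnW].
case: (Ha j (ltnSn j)) => [E|A].
  exists j'; first exact: leqW.
  by rewrite -E; exists g.
exists j'.+1; first by [].
exists (fun i => if (i <= j')%N then g i else f j.+1); split.
- by rewrite leq0n g0.
- by rewrite ltnn.
- move=> i Hi; case: ifP => Hi'; [exact: gV | apply: HV; exact: leqnn].
- move=> i Hi; rewrite -ltnS Hi; case: ifP => Hi'.
    by apply: ga.
  have -> : i = j' by apply/eqP; rewrite eqn_leq -ltnS Hi leqNgt Hi'.
  by rewrite gj.
Qed.

Section Proj.
Variable R : realType.
Variable n : nat.
Variable Phi : seq 'rV[R]_n.
Variable x0 : 'M[R]_n * 'rV[R]_n.

Lemma proj_class z : Wt_class Phi x0 z -> W_class Phi x0.1 z.1.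
Proof. by case=> g [[Wg _] ->]; exists g.1. Qed.

Lemma proj_walk x y j : walk (Wt_class Phi x0) (@Wt_comm R n) x y j ->
  exists2 j', (j' <= j)%N & walk (W_class Phi x0.1) (@W_comm R n) x.1 y.1 j'.
Proof.
case=> f [f0 fj fV fa].
rewrite -f0 -fj.
apply: (@lazy_walk _ _ _ (fun i => (f i).1)).
  by move=> i Hi; apply: proj_class; apply: fV.
move=> i Hi; case: (fa i Hi) => E _.
case: (eqVneq (f i).1 (f i.+1).1) => [->|ne]; [by left | right].
split; last by apply/eqP.
by move: E => /(congr1 fst) /=.
Qed.
End Proj.

Theorem lemma2p1 (R : realType) (n : nat) (Phi : seq 'rV[R]_n)
  (x0 : 'M[R]_n * 'rV[R]_n) :
  is_root_system Phi -> Wt_involution Phi x0 ->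
  (forall (x y : 'M[R]_n * 'rV[R]_n) (k : nat),
     Wt_class Phi x0 x -> Wt_class Phi x0 y ->
     dist_eq (W_class Phi x0.1) (@W_comm R n) x.1 y.1 k ->
     dist_ge (Wt_class Phi x0) (@Wt_comm R n) x y k) /\
  (disconnected (W_class Phi x0.1) (@W_comm R n) ->
   disconnected (Wt_class Phi x0) (@Wt_comm R n)).
Proof.
move=> _ _; split.
  move=> x y k _ _ [_ Hd] j Hj Hw.
  have [j' Hj' Hw'] := @proj_walk _ _ _ _ _ _ _ Hw.
  apply: (Hd j') => //; exact: leq_ltn_trans Hj' Hj.
case=> a [b [[g [Wg ->]] [h [Wh ->]] Hn]].
have Z0 : in_Z Phi 0 by exists [::]; rewrite big_nil.
exists (aff_mul (aff_mul (g, 0) x0) (aff_inv (g, 0))).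
exists (aff_mul (aff_mul (h, 0) x0) (aff_inv (h, 0))).
split.
- exists (g, 0). split. exact: (conj Wg Z0). reflexivity.
- exists (h, 0). split. exact: (conj Wh Z0). reflexivity.
- move=> k Hw; have [j' _ Hw'] := @proj_walk _ _ _ _ _ _ _ Hw.
  exact: (Hn j' Hw').
Qed.
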